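(* Let $L=2$, assume $\min\{d_1\}\ge d_{\min}$ (i.e., $d_1\ge\min\{d_0,d_2\}$), and suppose $\lambda=y_i^2$ for some $i\in[r_Y]$. Then for every $\bm\sigma^*\in\mathcal A$, there do not exist constants $\epsilon,\kappa>0$ such that $\mathrm{dist}(\bm W,\widehat{\mathcal W}_{\bm\sigma^*})\le\kappa\|\nabla G(\bm W)\|_F$ holds for all $\bm W$ with $\mathrm{dist}(\bm W,\widehat{\mathcal W}_{\bm\sigma^*})\le\epsilon$.
   Context: Setting: $d_0,d_1,d_2$ positive integers, $d_{\min}=\min\{d_0,d_2\}$, $\lambda>0$, $\bm Y\in\mathbb R^{d_2\times d_0}$ diagonal with entries $y_1\ge\dots\ge y_{d_{\min}}\ge0$, $r_Y$ the number of positive $y_i$, $G(\bm W_1,\bm W_2)=\|\bm W_2\bm W_1-\sqrt\lambda\bm Y\|_F^2+\lambda(\|\bm W_1\|_F^2+\|\bm W_2\|_F^2)$. $\mathcal A=\{\bm a\in\mathbb R^{d_{\min}}:a_i^3-\sqrt\lambda y_ia_i+\lambda a_i=0,a_i\ge0\ \forall i\}$. For $\bm\sigma^*\in\mathcal A$, $\widehat{\mathcal W}_{\bm\sigma^*}:=\mathcal W_{\mathrm{sort}(\bm\sigma^* )}$, where $\mathrm{sort}$ rearranges entries in nonincreasing order and, for $\bm\sigma$ nonincreasing with $\bm\sigma=\bm\Pi\bm a$, $\bm a\in\mathcal A$, $\bm\Pi$ a permutation matrix, $\mathcal W_{\bm\sigma}$ is the set of pairs $\bm W_1=\bm Q_2\bm\Sigma_1\mathrm{BlkD}(\bm\Pi,\bm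 I)\mathrm{BlkD}(\bm O_1,\dots,\bm O_{p_Y+1})$, $\bm W_2=\mathrm{BlkD}(\bm O_1^T,\dots,\bm O_{p_Y}^T,\widehat{\bm O}_{p_Y+1}^T)\mathrm{BlkD}(\bm\Pi^T,\bm I)\bm\Sigma_2\bm Q_2^T$, with $\bm\Sigma_l\in\mathbb R^{d_l\times d_{l-1}}$ having top-left block $\mathrm{diag}(\bm\sigma)$ and zeros elsewhere, and $\bm Q_2\in\mathcal O^{d_1}$, $\bm O_k\in\mathcal O^{h_k}$ ($h_k$ the multiplicities of the $p_Y$ distinct positive $y$-values), $\bm O_{p_Y+1}\in\mathcal O^{d_0-r_Y}$, $\widehat{\bm O}_{p_Y+1}\in\mathcal O^{d_2-r_Y}$ arbitrary orthogonal matrices. Distances/gradient norms are Frobenius norms on tuples. *)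

(* Defs.v *)
From HB Require Import structures.
From mathcomp Require Import all_boot all_order all_algebra all_fingroup.
From mathcomp Require Import all_classical all_reals all_analysis.
Set Implicit Arguments. Unset Strict Implicit. Unset Printing Implicit Defensive.
Import Order.TTheory GRing.Theory Num.Theory.
Local Open Scope classical_set_scope.
Local Open Scope ring_scope.

Section Defs.
Variable R : realType.

Definition frob2 (m n : nat) (A : 'M[R]_(m, n)) : R :=
  \sum_(i < m) \sum_(j < n) A i j ^+ 2.

(* read a finite vector v : 'I_n -> R at a natural index (0 outside range) *)
Definition ofnat (n : nat) (v : 'I_n -> R) (k : nat) : R :=
  oapp v 0 (insub k : option 'I_n).

Definition rdiag (n m p : nat) (v : 'I_n -> R) : 'M[R]_(m, p) :=
  \matrix_(i < m, j < p) (if val i == val j then ofnat v i else 0).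

Definition Ymat (d0 d2 : nat) (y : 'I_(minn d0 d2) -> R) : 'M[R]_(d2, d0) :=
  rdiag d2 d0 y.

Definition Gobj (d0 d1 d2 : nat) (lam : R) (y : 'I_(minn d0 d2) -> R)
  (W1 : 'M[R]_(d1, d0)) (W2 : 'M[R]_(d2, d1)) : R :=
  frob2 (W2 *m W1 - Num.sqrt lam *: Ymat y) + lam * (frob2 W1 + frob2 W2).

Definition inA (n : nat) (lam : R) (y a : 'I_n -> R) : Prop :=
  forall i, a i ^+ 3 - Num.sqrt lam * y i * a i + lam * a i = 0 /\ 0 <= a i.

Definition rY (n : nat) (y : 'I_n -> R) : nat := #|[set i | 0 < y i]|.

(* i, j (indices of a k x k matrix) lie in the same diagonal block of
   BlkD(O_1, ..., O_{p_Y}, O_{p_Y+1}): same positive y-value, or both >= r_Y *)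
Definition sameblk (n : nat) (y : 'I_n -> R) (k : nat) (i j : 'I_k) : bool :=
  if ((val i < rY y) && (val j < rY y))%N then ofnat y i == ofnat y j
  else ((rY y <= val i) && (rY y <= val j))%N.

Definition orthmx (k : nat) (O : 'M[R]_k) : Prop := O *m O^T = 1%:M.

Definition blkshape (n : nat) (y : 'I_n -> R) (k : nat) (O : 'M[R]_k) : Prop :=
  forall i j, ~~ sameblk y i j -> O i j = 0.

(* BlkD(Pi, I) in R^{k x k}, Pi = perm_mx s the n x n permutation matrix *)
Definition blkperm (n k : nat) (s : 'S_n) : 'M[R]_k :=
  \matrix_(i < k, j < k)
    match (insub (val i) : option 'I_n), (insub (val j) : option 'I_n) with
    | Some i', Some j' => (perm_mx s : 'M[R]_n) i' j'
    | _, _ => (val i == val j)%:R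
    end.

(* W_sigma (union over all admissible a in A and permutations Pi with sigma = Pi a) *)
Definition Wset (d0 d1 d2 : nat) (lam : R) (y : 'I_(minn d0 d2) -> R)
  (sigma : 'I_(minn d0 d2) -> R) : set ('M[R]_(d1, d0) * 'M[R]_(d2, d1)) :=
  [set W | exists (a : 'I_(minn d0 d2) -> R) (s : 'S_(minn d0 d2))
             (Q2 : 'M[R]_d1) (O0 : 'M[R]_d0) (O2 : 'M[R]_d2),
      [/\ inA lam y a /\ \col_i sigma i = perm_mx s *m \col_i a i,
          [/\ orthmx Q2, orthmx O0, orthmx O2, blkshape y O0 & blkshape y O2],
          (forall (i j : 'I_d0) (k l : 'I_d2), val i = val k -> val j = val l ->
              (val i < rY y)%N -> (val j < rY y)%N -> O0 i j = O2 k l),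
          W.1 = Q2 *m rdiag d1 d0 sigma *m blkperm d0 s *m O0 &
          W.2 = O2^T *m (blkperm d2 s)^T *m rdiag d2 d1 sigma *m Q2^T]].

Definition sortdesc (n : nat) (a : 'I_n -> R) : 'I_n -> R :=
  fun i => nth 0 (sort (fun x y : R => y <= x) [seq a j | j <- enum 'I_n]) i.

Definition What (d0 d1 d2 : nat) (lam : R) (y : 'I_(minn d0 d2) -> R)
  (sigma : 'I_(minn d0 d2) -> R) := Wset (d1 := d1) lam y (sortdesc sigma).

Definition distW (m0 m1 m2 : nat) (W : 'M[R]_(m1, m0) * 'M[R]_(m2, m1))
  (S : set ('M[R]_(m1, m0) * 'M[R]_(m2, m1))) : R :=
  inf [set Num.sqrt (frob2 (W.1 - V.1) + frob2 (W.2 - V.2)) | V in S].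

Definition gradnormG (d0 d1 d2 : nat) (lam : R) (y : 'I_(minn d0 d2) -> R)
  (W : 'M[R]_(d1, d0) * 'M[R]_(d2, d1)) : R :=
  Num.sqrt (
    \sum_(i < d1) \sum_(j < d0)
       (derive1 (fun t : R => Gobj lam y (W.1 + t *: delta_mx i j) W.2) 0) ^+ 2
  + \sum_(i < d2) \sum_(j < d1)
       (derive1 (fun t : R => Gobj lam y W.1 (W.2 + t *: delta_mx i j)) 0) ^+ 2).

End Defs.

(* Main.v *)
Require Import Defs.
From HB Require Import structures.
From mathcomp Require Import all_boot all_order all_algebra all_fingroup.
From mathcomp Require Import all_classical all_reals all_analysis.
From mathcomp Require Import ring lra.
Import Order.TTheory GRing.Theory Num.Theory.
Local Open Scope classical_set_scope.
Local Open Scope ring_scope.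

Section H.
Set Implicit Arguments. Unset Strict Implicit.
Variable R : realType.

Lemma derq (a b c : R) :
  derive1 (fun t : R => a + b * t + c * (t * t)) 0 = b.
Proof.
rewrite derive1E derive_val.
by rewrite add0r mul1r !scale0r addr0 scaler0 addr0 [LHS]mulr1.
Qed.

Lemma ofnat_val n (v : 'I_n -> R) (i : 'I_n) : ofnat v i = v i.
Proof. by rewrite /ofnat valK. Qed.

Lemma ofnat_ge n (v : 'I_n -> R) k : (n <= k)%N -> ofnat v k = 0.
Proof. by move=> h; rewrite /ofnat insubN // -leqNgt. Qed.

Lemma ofnat_op n (f : R -> R -> R) (u v : 'I_n -> R) k : f 0 0 = 0 ->
  ofnat (fun i => f (u i) (v i)) k = f (ofnat u k) (ofnat v k).
Proof. by move=> f0; rewrite /ofnat; case: insubP. Qed.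

Definition dot m p (A B : 'M[R]_(m, p)) := \sum_(i < m) \sum_(j < p) A i j * B i j.

Lemma dot_tr m p (A B : 'M[R]_(m, p)) : dot A B = \tr (A *m B^T).
Proof.
rewrite /dot /mxtrace; apply: eq_bigr => i _; rewrite mxE.
by apply: eq_bigr => j _; rewrite mxE.
Qed.

Lemma frob2_dot m p (A : 'M[R]_(m, p)) : frob2 A = dot A A.
Proof. by rewrite /frob2 /dot; apply: eq_bigr => i _; apply: eq_bigr => j _; rewrite expr2. Qed.

Lemma frob2_lin m p (A B : 'M[R]_(m, p)) t :
  frob2 (A + t *: B) = frob2 A + (2 * dot A B) * t + frob2 B * (t * t).
Proof.
rewrite /frob2 /dot mulr_sumr !mulr_suml -!big_split /=; apply: eq_bigr => i _.
rewrite mulr_sumr !mulr_suml -!big_split /=; apply: eq_bigr => j _.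
rewrite !mxE; ring.
Qed.

Lemma dot_delta m p (A : 'M[R]_(m, p)) i j : dot A (delta_mx i j) = A i j.
Proof.
rewrite /dot (bigD1 i) //=.
have -> : \sum_(i0 < m | i0 != i) \sum_(j0 < p) A i0 j0 * delta_mx i j i0 j0 = 0.
  by apply: big1 => k ki; apply: big1 => l _; rewrite mxE (negbTE ki) mulr0.
rewrite (bigD1 j) //=.
have -> : \sum_(j0 < p | j0 != j) A i j0 * delta_mx i j i j0 = 0.
  by apply: big1 => l lj; rewrite mxE eqxx (negbTE lj) mulr0.
by rewrite mxE !eqxx mulr1 !addr0.
Qed.

Lemma dot_mulr m k p (A : 'M[R]_(m, p)) (B : 'M[R]_(m, k)) C :
  dot A (B *m C) = dot (B^T *m A) C.
Proof.
by rewrite !dot_tr trmx_mul mulmxA mxtrace_mulC mulmxA.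
Qed.

Lemma dot_mull m k p (A : 'M[R]_(m, p)) (B : 'M[R]_(m, k)) C :
  dot A (B *m C) = dot (A *m C^T) B.
Proof. by rewrite !dot_tr trmx_mul mulmxA. Qed.

Lemma frob2_tr m p (A : 'M[R]_(m, p)) : frob2 A = \tr (A *m A^T).
Proof. by rewrite frob2_dot dot_tr. Qed.

Lemma frob2_orthl m p (Q : 'M[R]_m) (A : 'M[R]_(m, p)) :
  Q *m Q^T = 1%:M -> frob2 (Q *m A) = frob2 A.
Proof.
move=> /mulmx1C hQ.
by rewrite !frob2_tr trmx_mul !mulmxA mxtrace_mulC !mulmxA hQ mul1mx.
Qed.

Lemma frob2_orthr m p (O : 'M[R]_p) (A : 'M[R]_(m, p)) :
  O *m O^T = 1%:M -> frob2 (A *m O) = frob2 A.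
Proof.
move=> hO; rewrite !frob2_tr trmx_mul -mulmxA (mulmxA O) hO mul1mx //.
Qed.

End H.

Section H2.
Set Implicit Arguments. Unset Strict Implicit.
Variable R : realType.

Lemma rdiagD n m p (u v : 'I_n -> R) :
  rdiag m p (fun i => u i + v i) = rdiag m p u + rdiag m p v.
Proof.
apply/matrixP => i j; rewrite !mxE; case: eqP => _; last by rewrite addr0.
by rewrite (@ofnat_op R n (fun a b : R => a + b) u v i) ?addr0.
Qed.

Lemma rdiagZ n m p c (u : 'I_n -> R) :
  rdiag m p (fun i => c * u i) = c *: rdiag m p u.
Proof.
apply/matrixP => i j; rewrite !mxE; case: eqP => _; last by rewrite mulr0.
by rewrite (@ofnat_op R n (fun _ b : R => c * b) u u i) ?mulr0.
Qed.

Lemma rdiag_tr n m p (u : 'I_n -> R) : (rdiag m p u)^T = rdiag p m u.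
Proof.
apply/matrixP => i j; rewrite !mxE eq_sym; case: eqP => // /= e.
by rewrite e.
Qed.

Lemma rdiagM n m p q (u v : 'I_n -> R) : (n <= p)%N ->
  rdiag m p u *m rdiag p q v = rdiag m q (fun i => u i * v i).
Proof.
move=> hnp; apply/matrixP => i j; rewrite /rdiag !mxE.
rewrite (@ofnat_op R n (fun a b : R => a * b) u v i) ?mulr0 //.
have [ip|ip] := ltnP i p; last first.
  have u0 : ofnat u i = 0 by rewrite ofnat_ge ?(leq_trans hnp ip).
  rewrite u0 mul0r if_same.
  by apply: big1 => k _; rewrite !mxE; case: eqP => _; rewrite ?u0 ?mul0r.
rewrite (bigD1 (Ordinal ip)) //= big1 => [|k kn]; last first.
  rewrite !mxE; case: eqP => [e|]; last by rewrite mul0r.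
  by move: kn; rewrite -val_eqE /= e eqxx.
rewrite !mxE eqxx addr0 /=; case: eqP => _; by rewrite ?mulr0.
Qed.

Lemma frob2_rdiag n m p (v : 'I_n -> R) : (n <= m)%N -> (n <= p)%N ->
  frob2 (rdiag m p v) = \sum_(i < n) v i ^+ 2.
Proof.
move=> hm hp; rewrite /frob2 /rdiag.
have -> : \sum_(i < m) \sum_(j < p) rdiag m p v i j ^+ 2 =
          \sum_(i < m) ofnat v i ^+ 2.
  apply: eq_bigr => i _.
  have [ip|ip] := ltnP i n; last first.
    rewrite ofnat_ge // expr0n /=; apply: big1 => j _; rewrite !mxE.
    by case: eqP => _; rewrite ?ofnat_ge // expr0n.
  have ipp : (i < p)%N by apply: leq_trans hp.
  rewrite (bigD1 (Ordinal ipp)) //= big1 => [|k kn]; last first.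
    rewrite !mxE; case: eqP => [e|]; last by rewrite expr0n.
    by move: kn; rewrite -val_eqE /= e eqxx.
  by rewrite !mxE eqxx addr0.
have -> : \sum_(i < n) v i ^+ 2 = \sum_(i < n) ofnat v i ^+ 2.
  by apply: eq_bigr => i _; rewrite ofnat_val.
rewrite (big_ord_widen m (fun k => ofnat v k ^+ 2) hm) [RHS]big_mkcond /=.
apply: eq_bigr => i _; case: ltnP => // h; last by rewrite ofnat_ge // expr0n.
Qed.

Definition extf n k (s : 'S_n) (i : 'I_k) : 'I_k :=
  match insub (val i) : option 'I_n with
  | Some i' => odflt i (insub (val (s i')))
  | None => i end.

Lemma extf_lt n k (s : 'S_n) (i : 'I_k) (h : (i < n)%N) :
  (n <= k)%N -> val (extf s i) = val (s (Ordinal h)).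
Proof.
move=> hk; rewrite /extf; case: insubP => [i' _ ei'|]; last by rewrite h.
have -> : i' = Ordinal h by apply: val_inj.
case: insubP => [j _ ej //|]; by rewrite (leq_trans (ltn_ord _) hk).
Qed.

Lemma extf_ge n k (s : 'S_n) (i : 'I_k) : (n <= i)%N -> extf s i = i.
Proof. by move=> h; rewrite /extf insubN // -leqNgt. Qed.

Lemma extf_inj n k (s : 'S_n) : (n <= k)%N -> injective (@extf n k s).
Proof.
move=> hk i j.
have [hi|hi] := ltnP i n; have [hj|hj] := ltnP j n.
- move/(congr1 val); rewrite !extf_lt // => /val_inj/perm_inj [] e.
  by apply: val_inj.
- rewrite (extf_ge s hj) => e; move: hj; rewrite -e extf_lt //.
  by rewrite leqNgt ltn_ord.
- rewrite (extf_ge s hi) => e; move: hi; rewrite e extf_lt //.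
  by rewrite leqNgt ltn_ord.
- by rewrite !extf_ge.
Qed.

Definition extp n k (s : 'S_n) (hk : (n <= k)%N) : 'S_k := perm (@extf_inj n k s hk).

Lemma blkperm_perm n k (s : 'S_n) (hk : (n <= k)%N) :
  blkperm R k s = perm_mx (extp s hk).
Proof.
apply/matrixP => i j; rewrite [RHS]mxE [RHS]mxE permE.
rewrite /blkperm mxE.
have [hi|hi] := ltnP i n; have [hj|hj] := ltnP j n.
- rewrite (insubT (fun x => (x < n)%N) hi) (insubT (fun x => (x < n)%N) hj) /= !mxE.
  congr ((nat_of_bool _)%:R).
  have E : val (extf s i) = val (s (Ordinal hi)) by apply: extf_lt.
  apply/idP/idP => /eqP e; apply/eqP; apply: val_inj.
    by rewrite E; move/(congr1 val): e.
  by rewrite SubK -e E.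
- rewrite (insubT (fun x => (x < n)%N) hi) insubN -?leqNgt //=; congr ((nat_of_bool _)%:R).
  rewrite -val_eqE /= extf_lt //; apply/idP/idP => /eqP e.
    by move: hj; rewrite -e leqNgt hi.
  by move: hj; rewrite -e leqNgt ltn_ord.
- rewrite insubN -?leqNgt //= extf_ge //.
- by rewrite insubN -?leqNgt //= extf_ge.
Qed.

Lemma perm_orth k (e : 'S_k) : perm_mx e *m (perm_mx e)^T = 1%:M :> 'M[R]_k.
Proof. by rewrite tr_perm_mx -perm_mxM mulgV perm_mx1. Qed.

Lemma blkperm_orth n k (s : 'S_n) : (n <= k)%N ->
  blkperm R k s *m (blkperm R k s)^T = 1%:M :> 'M[R]_k.
Proof. by move=> hk; rewrite (blkperm_perm s hk) perm_orth. Qed.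

Lemma blkperm_orth' n k (s : 'S_n) : (n <= k)%N ->
  (blkperm R k s)^T *m blkperm R k s = 1%:M :> 'M[R]_k.
Proof. by move=> hk; apply: mulmx1C; apply: blkperm_orth. Qed.

End H2.

Section H3.
Set Implicit Arguments. Unset Strict Implicit.
Variable R : realType.

Lemma ofnat_lt n (v : 'I_n -> R) k (h : (k < n)%N) : ofnat v k = v (Ordinal h).
Proof. by rewrite /ofnat (insubT (fun x => (x < n)%N) h). Qed.

Lemma rdiag_ext n k2 k0 (s : 'S_n) (v : 'I_n -> R) (h2 : (n <= k2)%N) (h0 : (n <= k0)%N)
  (i : 'I_k2) (j : 'I_k0) :
  rdiag k2 k0 (fun x => v (s x)) i j = rdiag k2 k0 v (extf s i) (extf s j).
Proof.
rewrite /rdiag !mxE.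
have [hi|hi] := ltnP i n; last first.
  by rewrite [extf s i]extf_ge // !ofnat_ge // !if_same.
have Ei : val (extf s i) = val (s (Ordinal hi)) by apply: extf_lt.
have Ei' : nat_of_ord (extf s i) = nat_of_ord (s (Ordinal hi)) by [].
rewrite Ei Ei' ofnat_val (ofnat_lt _ hi).
have [hj|hj] := ltnP j n.
  have Ej : val (extf s j) = val (s (Ordinal hj)) by apply: extf_lt.
  rewrite Ej val_eqE (inj_eq (@perm_inj _ s)) -val_eqE.
  by [].
rewrite [extf s j]extf_ge //.
have -> : (val i == val j) = false.
  by apply/negbTE; apply/eqP => e; move: hj; rewrite -e leqNgt hi.
have -> : (val (s (Ordinal hi)) == val j) = false.
  by apply/negbTE; apply/eqP => e; move: hj; rewrite -e leqNgt ltn_ord.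
by [].
Qed.

Lemma rdiag_conj n k2 k0 (s : 'S_n) (v : 'I_n -> R) (h2 : (n <= k2)%N) (h0 : (n <= k0)%N) :
  (blkperm R k2 s)^T *m rdiag k2 k0 (fun x => v (s x)) *m blkperm R k0 s = rdiag k2 k0 v.
Proof.
rewrite (blkperm_perm R s h2) (blkperm_perm R s h0) tr_perm_mx -row_permE.
rewrite -[extp s h0]invgK -col_permE.
apply/matrixP => i j.
have := rdiag_ext s v h2 h0 ((extp s h2)^-1%g i) ((extp s h0)^-1%g j).
have K2 : forall x, extf s ((extp s h2)^-1%g x) = x.
  by move=> x; have := permKV (extp s h2) x; rewrite permE.
have K0 : forall x, extf s ((extp s h0)^-1%g x) = x.
  by move=> x; have := permKV (extp s h0) x; rewrite permE.
rewrite K2 K0 => <-.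
by rewrite !mxE.
Qed.

Lemma rdiagB n m p (u v : 'I_n -> R) :
  rdiag m p (fun i => u i - v i) = rdiag m p u - rdiag m p v.
Proof.
apply/matrixP => i j; rewrite !mxE; case: eqP => _; last by rewrite subr0.
by rewrite (@ofnat_op R n (fun a b : R => a - b) u v i) ?subr0.
Qed.

Lemma frob2_add m p (A D : 'M[R]_(m, p)) :
  frob2 (A + D) = frob2 A + 2 * dot A D + frob2 D.
Proof. by have := frob2_lin A D 1; rewrite scale1r !mulr1. Qed.

Lemma frob2_ge0 m p (A : 'M[R]_(m, p)) : 0 <= frob2 A.
Proof. by apply: sumr_ge0 => i _; apply: sumr_ge0 => j _; apply: sqr_ge0. Qed.

Lemma dot_amgm m p (A B : 'M[R]_(m, p)) u :
  2 * u * dot A B <= u ^+ 2 * frob2 A + frob2 B.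
Proof.
rewrite /dot /frob2 mulr_sumr mulr_sumr -big_split /=.
apply: ler_sum => i _; rewrite mulr_sumr mulr_sumr -big_split /=.
apply: ler_sum => j _.
have := sqr_ge0 (u * A i j - B i j); nra.
Qed.

Definition Mres d0 d1 d2 lam (y : 'I_(minn d0 d2) -> R) (W1 : 'M[R]_(d1, d0)) (W2 : 'M[R]_(d2, d1)) :=
  W2 *m W1 - Num.sqrt lam *: Ymat y.

Lemma grad_formula d0 d1 d2 lam (y : 'I_(minn d0 d2) -> R) (W1 : 'M[R]_(d1, d0)) (W2 : 'M[R]_(d2, d1)) :
  gradnormG lam y (W1, W2) =
  Num.sqrt (4 * frob2 (W2^T *m Mres lam y W1 W2 + lam *: W1)
          + 4 * frob2 (Mres lam y W1 W2 *m W1^T + lam *: W2)).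
Proof.
rewrite /gradnormG /=; congr (Num.sqrt (_ + _)).
  rewrite /frob2 mulr_sumr; apply: eq_bigr => i _; rewrite mulr_sumr; apply: eq_bigr => j _.
  set D := delta_mx i j.
  have -> : (fun t => Gobj lam y (W1 + t *: D) W2) =
     (fun t => (frob2 (Mres lam y W1 W2) + lam * (frob2 W1 + frob2 W2))
       + (2 * dot (Mres lam y W1 W2) (W2 *m D) + lam * (2 * dot W1 D)) * t
       + (frob2 (W2 *m D) + lam * frob2 D) * (t * t)).
    apply: funext => t; rewrite /Gobj.
    have -> : W2 *m (W1 + t *: D) - Num.sqrt lam *: Ymat y = Mres lam y W1 W2 + t *: (W2 *m D).
      by rewrite /Mres mulmxDr -scalemxAr addrAC.
    rewrite !frob2_lin; ring.
  rewrite derq dot_mulr /D !dot_delta !mxE; ring.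
rewrite /frob2 mulr_sumr; apply: eq_bigr => i _; rewrite mulr_sumr; apply: eq_bigr => j _.
set D := delta_mx i j.
have -> : (fun t => Gobj lam y W1 (W2 + t *: D)) =
   (fun t => (frob2 (Mres lam y W1 W2) + lam * (frob2 W1 + frob2 W2))
     + (2 * dot (Mres lam y W1 W2) (D *m W1) + lam * (2 * dot W2 D)) * t
     + (frob2 (D *m W1) + lam * frob2 D) * (t * t)).
  apply: funext => t; rewrite /Gobj.
  have -> : (W2 + t *: D) *m W1 - Num.sqrt lam *: Ymat y = Mres lam y W1 W2 + t *: (D *m W1).
    by rewrite /Mres mulmxDl -scalemxAl addrAC.
  rewrite !frob2_lin; ring.
rewrite derq dot_mull /D !dot_delta !mxE; ring.
Qed.

End H3.

Theorem lemmaA1 (R : realType) (d0 d1 d2 : nat) (lam : R)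
  (y : 'I_(minn d0 d2) -> R) :
  0 < lam ->
  (forall i j : 'I_(minn d0 d2), (val i <= val j)%N -> y j <= y i) ->
  (forall i : 'I_(minn d0 d2), 0 <= y i) ->
  (minn d0 d2 <= d1)%N ->
  (exists i : 'I_(minn d0 d2), 0 < y i /\ lam = y i ^+ 2) ->
  forall sigma : 'I_(minn d0 d2) -> R, inA lam y sigma ->
  ~ (exists eps kappa : R, 0 < eps /\ 0 < kappa /\
       forall W : 'M[R]_(d1, d0) * 'M[R]_(d2, d1),
         distW W (What (d1 := d1) lam y sigma) <= eps ->
         distW W (What (d1 := d1) lam y sigma) <= kappa * gradnormG lam y W).
Proof.
move=> lam0 ymono ypos hn1 [i0 [yi0 lamE]] sigma hA [eps [kappa [he [hk H]]]].
have hn0 : (minn d0 d2 <= d0)%N := geq_minl d0 d2.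
have hn2 : (minn d0 d2 <= d2)%N := geq_minr d0 d2.
have sq : Num.sqrt lam = y i0 by rewrite lamE sqrtr_sqr ger0_norm // ltW.
have s0 : sigma i0 = 0.
  have h3 : sigma i0 ^+ 3 = 0.
    have := (hA i0).1; rewrite sq lamE => h; rewrite -[RHS]h; ring.
  by move/eqP: h3; rewrite expf_eq0 => /andP[_ /eqP].
have [s hs] : exists s : 'S_(minn d0 d2), forall i, sortdesc sigma i = sigma (s i).
  set t := [tuple sigma i | i < minn d0 d2].
  have hp : perm_eq (sort (fun x y : R => y <= x) t) t by rewrite perm_sort perm_refl.
  have /tuple_permP [p hp'] := hp.
  exists p => i; rewrite /sortdesc.
  have -> : [seq sigma j | j <- enum 'I_(minn d0 d2)] = t by rewrite /t /=.
  by rewrite hp' -tnth_nth !tnth_mktuple.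
have hcol : \col_i sortdesc sigma i = perm_mx s *m \col_i sigma i.
  by apply/matrixP => i j; rewrite -row_permE !mxE hs.
set n := minn d0 d2 in y ymono ypos hn1 i0 yi0 lamE sigma hA H hn0 hn2 sq s0 s hs hcol *.
set psi := sortdesc sigma in hs hcol *.
pose r := (s^-1)%g i0.
have hr : s r = i0 by rewrite /r permKV.
have psir : psi r = 0 by rewrite hs hr.
pose P0 := blkperm R d0 s.
pose P2 := blkperm R d2 s.
have oP0 : P0 *m P0^T = 1%:M by apply: blkperm_orth.
have oP2 : P2 *m P2^T = 1%:M by apply: blkperm_orth.
have oP2' : P2^T *m P2^T^T = 1%:M by rewrite trmxK; apply: blkperm_orth'.
pose c0 := \sum_(i < n) psi i ^+ 2.
have c0ge : 0 <= c0 by apply: sumr_ge0 => i _; apply: sqr_ge0.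
have F1 : forall V, What (d1 := d1) lam y sigma V -> frob2 V.1 = c0.
  move=> V [a [s1 [Q2 [U0 [U2 [[hAa hcola] [oQ oO0 oO2 _ _] _ -> _]]]]]].
  rewrite frob2_orthr // frob2_orthr ?blkperm_orth // frob2_orthl //.
  by rewrite frob2_rdiag.
pose Vs : 'M[R]_(d1, d0) * 'M[R]_(d2, d1) :=
  (1%:M *m rdiag d1 d0 psi *m P0 *m 1%:M, (1%:M)^T *m P2^T *m rdiag d2 d1 psi *m (1%:M)^T).
have hVs : What (d1 := d1) lam y sigma Vs.
  exists sigma, s, 1%:M, 1%:M, 1%:M; split => //.
  - split; rewrite /orthmx ?trmx1 ?mulmx1 //; move=> i j; rewrite mxE;
      (case: (i =P j) => [<-|] //; rewrite /sameblk eqxx andbb; case: ltnP => //).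
  - move=> i j k l /= eik ejl _ _; rewrite !mxE.
    by rewrite -val_eqE -[k == l]val_eqE /= eik ejl.
pose K := 8 * kappa * (c0 + 2).
have K0 : 0 < K by rewrite /K; apply: mulr_gt0; [apply: mulr_gt0 => //| lra].
pose t := Num.min (Num.min 1 (eps / 2)) K^-1.
have ht0 : 0 < t by rewrite /t !lt_min ltr01 divr_gt0 // invr_gt0.
have ht1 : t <= 1 by rewrite /t !ge_min lexx.
have hte : t <= eps / 2 by rewrite /t !ge_min lexx orbT.
have htK : t * K <= 1.
  have : t <= K^-1 by rewrite /t ge_min lexx orbT.
  by rewrite -(ler_pM2r K0) mulVf // gt_eqF.
pose e : 'I_n -> R := fun i => if i == r then t else 0.
pose phi : 'I_n -> R := fun i => psi i + e i.
have sume : \sum_(i < n) e i ^+ 2 = t ^+ 2.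
  rewrite (bigD1 r) //= /e eqxx big1 ?addr0 // => i /negbTE ->; exact: expr0n.
pose Wt : 'M[R]_(d1, d0) * 'M[R]_(d2, d1) :=
  (rdiag d1 d0 phi *m P0, P2^T *m rdiag d2 d1 phi).
have F2 : frob2 Wt.1 = c0 + t ^+ 2.
  rewrite /= frob2_orthr // frob2_rdiag // /c0 (bigD1 r) //= [in RHS](bigD1 r) //=.
  rewrite /phi /e eqxx psir add0r expr0n /= add0r addrC; congr (_ + _).
  by apply: eq_bigr => i /negbTE ->; rewrite addr0.
pose S := [set Num.sqrt (frob2 (Wt.1 - V.1) + frob2 (Wt.2 - V.2)) | V in What (d1 := d1) lam y sigma].
have lbS : has_lbound S by exists 0 => _ [V _ <-]; apply: sqrtr_ge0.
have hD1 : Wt.1 - Vs.1 = rdiag d1 d0 e *m P0.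
  by rewrite /= mul1mx mulmx1 -mulmxBl /phi rdiagD addrAC subrr add0r.
have hD2 : Wt.2 - Vs.2 = P2^T *m rdiag d2 d1 e.
  by rewrite /= !trmx1 mul1mx mulmx1 -mulmxBr /phi rdiagD addrAC subrr add0r.
have Dup : distW Wt (What (d1 := d1) lam y sigma) <= eps.
  apply: le_trans (ge_inf lbS (ex_intro2 _ _ Vs hVs erefl)) _.
  rewrite hD1 hD2 frob2_orthr // frob2_orthl // !frob2_rdiag // sume.
  rewrite -[X in _ <= X](@ger0_norm _ eps) ?ltW // -sqrtr_sqr ltr_sqrt ?exprn_gt0 //.
  have h1 : t ^+ 2 <= (eps / 2) ^+ 2 by rewrite ler_pXn2r // ?nnegrE ltW // divr_gt0.
  have h2 : (eps / 2) ^+ 2 = eps ^+ 2 / 4 by rewrite expr_div_n; congr (_ / _); rewrite -natrX.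
  have h3 : 0 < eps ^+ 2 by rewrite exprn_gt0.
  lra.
pose L := t ^+ 4 / (4 * c0 + 6).
have Dlow : Num.sqrt L <= distW Wt (What (d1 := d1) lam y sigma).
  apply: lb_le_inf; first by exists (Num.sqrt (frob2 (Wt.1 - Vs.1) + frob2 (Wt.2 - Vs.2))), Vs.
  move=> _ [V hV <-]; apply: ler_wsqrtr.
  have hf2 := frob2_ge0 (Wt.2 - V.2).
  suff : L <= frob2 (Wt.1 - V.1) by lra.
  set D := Wt.1 - V.1.
  have hW : Wt.1 = V.1 + D by rewrite /D addrC subrK.
  have eq1 : c0 + t ^+ 2 = c0 + 2 * dot V.1 D + frob2 D by rewrite -F2 hW frob2_add (F1 _ hV).
  pose w := (2 * (c0 + 1))^-1.
  have hw : w * (2 * (c0 + 1)) = 1 by rewrite mulVf // gt_eqF //; lra.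
  have hw0 : 0 < w by rewrite invr_gt0; lra.
  have am := dot_amgm V.1 D (t ^+ 2 * w).
  rewrite (F1 _ hV) in am.
  have hd := frob2_ge0 D.
  set d := frob2 D in eq1 am hd *.
  set q := dot V.1 D in eq1 am *.
  have i1 : t ^+ 2 * w * t ^+ 2 <= (t ^+ 2 * w) ^+ 2 * c0 + d * (1 + t ^+ 2 * w) by nra.
  have i2 : t ^+ 4 <= t ^+ 4 * (w * c0) + d * (2 * (c0 + 1) + t ^+ 2).
    have := ler_wpM2r (x := 2 * (c0 + 1)) _ i1.
    have -> : t ^+ 2 * w * t ^+ 2 * (2 * (c0 + 1)) = t ^+ 4 * (w * (2 * (c0 + 1))) by ring.
    have -> : ((t ^+ 2 * w) ^+ 2 * c0 + d * (1 + t ^+ 2 * w)) * (2 * (c0 + 1))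
        = t ^+ 4 * (w * c0) * (w * (2 * (c0 + 1))) + d * (2 * (c0 + 1) + t ^+ 2 * (w * (2 * (c0 + 1)))) by ring.
    rewrite hw !mulr1; apply; lra.
  have i3 : w * c0 <= 1 / 2.
    have : w * c0 * (2 * (c0 + 1)) <= 1 / 2 * (2 * (c0 + 1)).
      have -> : w * c0 * (2 * (c0 + 1)) = c0 * (w * (2 * (c0 + 1))) by ring.
      rewrite hw; lra.
    by rewrite ler_pM2r //; lra.
  have t2 : t ^+ 2 <= 1 by rewrite expr_le1 // ltW.
  have t4 : 0 <= t ^+ 4 by rewrite exprn_ge0 // ltW.
  rewrite /L ler_pdivrMr; last by lra.
  nra.
pose h : 'I_n -> R := fun i => phi i * phi i - Num.sqrt lam * y (s i).
pose g : 'I_n -> R := fun i => phi i * (phi i * phi i - Num.sqrt lam * y (s i)) + lam * phi i.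
have hM : Mres lam y Wt.1 Wt.2 = P2^T *m rdiag d2 d0 h *m P0.
  rewrite /Mres /Ymat /h rdiagB mulmxBr mulmxBl.
  rewrite (rdiag_conj s (fun i => Num.sqrt lam * y i) hn2 hn0) rdiagZ.
  by rewrite -(rdiagM d2 d0 phi phi hn1) /= !mulmxA.
have hG1 : Wt.2^T *m Mres lam y Wt.1 Wt.2 + lam *: Wt.1 = rdiag d1 d0 g *m P0.
  rewrite hM /= trmx_mul trmxK rdiag_tr !mulmxA -[rdiag d1 d2 phi *m P2 *m P2^T]mulmxA oP2 mulmx1.
  rewrite (rdiagM d1 d0 phi h hn2) scalemxAl -rdiagZ -mulmxDl -rdiagD.
  by [].
have hG2 : Mres lam y Wt.1 Wt.2 *m Wt.1^T + lam *: Wt.2 = P2^T *m rdiag d2 d1 g.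
  rewrite hM /= trmx_mul rdiag_tr !mulmxA -[P2^T *m rdiag d2 d0 h *m P0 *m P0^T]mulmxA oP0 mulmx1.
  rewrite -mulmxA (rdiagM d2 d1 h phi hn0) scalemxAr -rdiagZ -mulmxDr -rdiagD.
  congr (_ *m rdiag _ _ _); apply: funext => i; rewrite /g /h; ring.
have sumg : \sum_(i < n) g i ^+ 2 = t ^+ 6.
  rewrite (bigD1 r) //= big1 ?addr0 => [|i ir].
    rewrite /g /phi /e eqxx psir add0r hr sq lamE; ring.
  have -> : g i = 0; last by rewrite expr0n.
  rewrite /g /phi /e (negbTE ir) addr0 hs.
  have := (hA (s i)).1; move=> <-; ring.
have Fg : gradnormG lam y Wt = Num.sqrt (4 * t ^+ 6 + 4 * t ^+ 6).
  rewrite (surjective_pairing Wt) grad_formula hG1 hG2 frob2_orthr // frob2_orthl //.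
  by rewrite !frob2_rdiag // sumg.
have hup := H Wt Dup; rewrite Fg in hup.
have := le_trans Dlow hup.
have ek : kappa * Num.sqrt (4 * t ^+ 6 + 4 * t ^+ 6) = Num.sqrt (kappa ^+ 2 * (4 * t ^+ 6 + 4 * t ^+ 6)).
  by rewrite sqrtrM ?sqr_ge0 // sqrtr_sqr ger0_norm // ltW.
rewrite ek.
rewrite ler_sqrt; last by apply: mulr_ge0; [apply: sqr_ge0 | rewrite addr_ge0 // mulr_ge0 // exprn_ge0 // ltW].
rewrite /L ler_pdivrMr; last by lra.
move=> hfin.
have t4 : 0 < t ^+ 4 by rewrite exprn_gt0.
have hx : 1 <= 8 * (4 * c0 + 6) * (kappa * t) ^+ 2.
  rewrite -(ler_pM2l t4) mulr1; apply: (le_trans hfin).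
  rewrite le_eqVlt; apply/orP; left; apply/eqP; ring.
have hkt : kappa * t * (8 * (c0 + 2)) <= 1.
  apply: le_trans htK; rewrite /K le_eqVlt; apply/orP; left; apply/eqP; ring.
have kt0 : 0 < kappa * t by apply: mulr_gt0.
set X := kappa * t in hx hkt kt0.
nra.
Qed.
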